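(* There exist sets $\mathcal X,\mathcal Y$, a metric $\ell$ on $\mathcal Y$, and a class $\mathcal H\subseteq\mathcal Y^{\mathcal X}$ such that $\operatorname{diam}(\mathcal H)<\infty$, $\Phi(\mathcal H)=\infty$, and $\mathbb{D}_{\mathrm{onl}}(\mathcal H)<\infty$.
   Context: For $\ell:\mathcal Y\times\mathcal Y\to\mathbb R_{\ge0}$ and $\mathcal H\subseteq\mathcal Y^{\mathcal X}$: $d_\ell(f,g)=\sup_x\ell(f(x),g(x))$, $\operatorname{diam}(\mathcal H)=\sup_{f,g\in\mathcal H}d_\ell(f,g)$, $N(\mathcal H,\varepsilon)$ is the minimal size of $S\subseteq\mathcal H$ such that every $h\in\mathcal H$ is within $d_\ell$-distance $\le\varepsilon$ of some $s\in S$ ($+\infty$ if none finite), and $\Phi(\mathcal H)=\int_0^{\operatorname{diam}(\mathcal H)}\log_2N(\mathcal H,\varepsilon)d\varepsilon$. Scaled Littlestone tree of depth $D\le\infty$: internal nodes $u\in\{0,1\}^{<D}$ labeled $x_u\in\mathcal X$, edges labeled $s_{u,0},s_{u,1}\in\mathcal Y$, gap $\gamma_u=\ell(s_{u,0},s_{u,1})$; realizable by $\mathcal H$ if for every branch $b$ and finite $n\le D$ some $h\in\mathcal{H}$ has $h(x_{b_{\le t}})=s_{b_{\le t},b_{t+1}}$ for $t<n$ ($b_{\le t}$ the length-$t$ prefix). $\mathbb{D}_{\mathrm{onl}}(\mathcal{H})=\sup_{\mathcal T}\inf_b\sum_t\gamma_{b_{\le t}}$ over realizable trees $\mathcal T$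 and branches $b$. *)

(* Defs.v *)
From HB Require Import structures.
From mathcomp Require Import all_boot all_order all_algebra.
From mathcomp Require Import all_classical all_reals all_analysis.
From mathcomp Require Import Rstruct Rstruct_topology.
Set Implicit Arguments. Unset Strict Implicit. Unset Printing Implicit Defensive.
Import Order.TTheory GRing.Theory Num.Theory.
Local Open Scope classical_set_scope.
Local Open Scope ring_scope.
Local Open Scope ereal_scope.

Section Defs.
Variable R : realType.

Definition is_metric (Y : Type) (ell : Y -> Y -> R) : Prop :=
  [/\ forall a b, (0 <= ell a b)%R,
      forall a b, ell a b = 0%R <-> a = b,
      forall a b, ell a b = ell b a
    & forall a b c, (ell a c <= ell a b + ell b c)%R].

(* d_ell(f,g) = sup_x ell(f x, g x)  (value 0 when X is empty) *)
Definition dl (X Y : Type) (ell : Y -> Y -> R) (f g : X -> Y) : \bar R :=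
  ereal_sup (0 |` [set (ell (f x) (g x))%:E | x in [set: X]]).

(* diam(H) = sup_{f,g in H} d_ell(f,g)  (value 0 when H is empty) *)
Definition diam (X Y : Type) (ell : Y -> Y -> R) (H : set (X -> Y)) : \bar R :=
  ereal_sup (0 |` [set dl ell fg.1 fg.2 | fg in [set fg | H fg.1 /\ H fg.2]]).

(* N(H, eps): minimal size of a finite S (given as a list, whose minimal
   length equals the minimal cardinality) of elements of H such that every
   h in H is within distance <= eps of some s in S; +oo if none exists. *)
Definition covering_number (X Y : Type) (ell : Y -> Y -> R)
    (H : set (X -> Y)) (eps : R) : \bar R :=
  ereal_inf [set ((size S)%:R)%:E | S in
    [set S : seq (X -> Y) |
       (forall s, List.In s S -> H s) /\
       (forall h, H h -> exists2 s, List.In s S & dl ell h s <= eps%:E)]].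

Definition elog2 (x : \bar R) : \bar R :=
  match x with
  | r%:E => (ln r / ln 2)%:E
  | +oo => +oo
  | -oo => -oo
  end.

Definition Phi (X Y : Type) (ell : Y -> Y -> R) (H : set (X -> Y)) : \bar R :=
  \int[@lebesgue_measure R]_(e in [set e : R | 0 <= e%:E <= diam ell H])
     elog2 (covering_number ell H e).

(* Depth D : \bar nat encoded as option nat
   (None = infinite depth).  Nodes are finite bit strings u (seq bool);
   only nodes with size u < D are internal nodes.  tx u = x_u,
   ts u b = s_{u,b}. *)
Definition lt_depth (D : option nat) (n : nat) : Prop :=
  match D with Some d => (n < d)%N | None => True end.
Definition le_depth (D : option nat) (n : nat) : Prop :=
  match D with Some d => (n <= d)%N | None => True end.

Definition prefix (b : nat -> bool) (t : nat) : seq bool := mkseq b t.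

(* A branch is an infinite bit sequence; for finite depth D only its first
   D bits matter. *)
Definition realizable (X Y : Type) (H : set (X -> Y)) (D : option nat)
    (tx : seq bool -> X) (ts : seq bool -> bool -> Y) : Prop :=
  forall (b : nat -> bool) (n : nat), le_depth D n ->
    exists2 h, H h &
      forall t, (t < n)%N -> h (tx (prefix b t)) = ts (prefix b t) (b t).

Definition gap (Y : Type) (ell : Y -> Y -> R) (ts : seq bool -> bool -> Y)
    (u : seq bool) : R := ell (ts u false) (ts u true).

Definition branch_sum (Y : Type) (ell : Y -> Y -> R) (D : option nat)
    (ts : seq bool -> bool -> Y) (b : nat -> bool) : \bar R :=
  \esum_(t in [set t : nat | lt_depth D t]) (gap ell ts (prefix b t))%:E.

Definition Donl (X Y : Type) (ell : Y -> Y -> R) (H : set (X -> Y)) : \bar R :=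
  ereal_sup [set ereal_inf [set branch_sum ell T.1.1 T.2 b | b in [set: nat -> bool]]
            | T in [set T : (option nat * (seq bool -> X)) * (seq bool -> bool -> Y) |
                     realizable H T.1.1 T.1.2 T.2]].
End Defs.

(* Main.v *)
Require Import Defs.
From mathcomp Require Import all_boot all_order all_algebra.
From mathcomp Require Import all_classical all_reals all_analysis.
From mathcomp Require Import Rstruct Rstruct_topology.
Import Order.TTheory GRing.Theory Num.Theory.
Local Open Scope classical_set_scope.
Local Open Scope ereal_scope.

Notation RR := Rdefinitions.R.
Definition ell (a b : nat) : RR := if a == b then 0%R else 1%R.
Arguments ell : simpl never.

Lemma ell_ge0 a b : (0 <= ell a b)%R.
Proof. by rewrite /ell; case: eqP. Qed.
Lemma ell_le1 a b : (ell a b <= 1)%R.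
Proof. by rewrite /ell; case: eqP. Qed.

Lemma metric_ell : is_metric ell.
Proof.
split.
- exact: ell_ge0.
- move=> a b; rewrite /ell; case: eqP => //; split => // /eqP; rewrite oner_eq0.
  by [].
- by move=> a b; rewrite /ell eq_sym.
- move=> a b c; rewrite /ell.
  case: (eqVneq a c) => [_|ac]; first by rewrite addr_ge0 // ell_ge0.
  case: (eqVneq a b) => [eab|_]; last by case: eqP => _; rewrite ?addr0 // lerDl.
  by subst; rewrite (negbTE ac) add0r.
Qed.

Lemma dl_le1 (f g : unit -> nat) : dl ell f g <= 1%:E.
Proof.
rewrite /dl; apply: ge_ereal_sup => _ [->|[x _ <-]]; first by rewrite lee_fin.
by rewrite lee_fin ell_le1.
Qed.

Lemma dl_ge (f g : unit -> nat) x : (ell (f x) (g x))%:E <= dl ell f g.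
Proof. by apply: ereal_sup_ubound; right; exists x. Qed.

Lemma diam1 : diam ell [set: unit -> nat] = 1%:E.
Proof.
apply/eqP; rewrite eq_le; apply/andP; split.
  apply: ge_ereal_sup => _ [->|[fg _ <-]]; first by rewrite lee_fin.
  exact: dl_le1.
apply: (le_trans _ (ereal_sup_ubound _)); last first.
  right; exists (fun _ => 0%N, fun _ => 1%N) => //.
by apply: (le_trans _ (dl_ge _ _ tt)); rewrite /ell.
Qed.

Lemma in_sumn (S : seq (unit -> nat)) s :
  List.In s S -> (s tt <= sumn (map (fun s => s tt) S))%N.
Proof.
elim: S => //= a S IH [->|/IH h]; first exact: leq_addr.
exact: (leq_trans h (leq_addl _ _)).
Qed.

Lemma cov_inf (e : RR) : (e < 1)%R -> covering_number ell [set: unit -> nat] e = +oo.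
Proof.
move=> e1; rewrite /covering_number.
apply/ereal_inf_pinfty => x [S [_ HS] _]; exfalso.
set m := sumn (map (fun s => s tt) S).
have [s sS hs] := HS (fun _ => m.+1) I.
have le := @in_sumn S s sS.
have := le_trans (dl_ge (fun _ => m.+1) s tt) hs.
rewrite /ell; case: eqP => [/= E|_]; first by move: le; rewrite -E ltnn.
by rewrite lee_fin => /(lt_le_trans e1); rewrite ltxx.
Qed.

Lemma cov_one : covering_number ell [set: unit -> nat] 1%R = 1%:E.
Proof.
apply/eqP; rewrite eq_le; apply/andP; split.
  apply: ereal_inf_lbound; exists [:: fun _ => 0%N] => //; split => // h _.
  by exists (fun _ => 0%N); [left | exact: dl_le1].
apply: le_ereal_inf_tmp => _ [S [_ HS] <-].
have [s sS _] := HS (fun _ => 0%N) I.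
rewrite lee_fin ler1n; case: S sS {HS} => //.
Qed.

Lemma elog2_one : elog2 (1%:E : \bar RR) = 0.
Proof. by rewrite /elog2 ln1 mul0r. Qed.

Lemma Phi_inf : Phi ell [set: unit -> nat] = +oo.
Proof.
rewrite /Phi diam1.
set f := fun e : measurableTypeR RR => elog2 (covering_number ell [set: unit -> nat] e).
set D := [set e : RR | 0 <= e%:E <= 1%:E] : set (measurableTypeR RR).
set A := `[0%R, 1%R[%classic : set (measurableTypeR RR).
have DE : D = A `|` [set 1%R].
  apply/seteqP; split => x /=.
    move=> /andP[]; rewrite !lee_fin => x0 x1; have [->|xn1] := eqVneq x 1%R; first by right.
    by left; rewrite /A /= in_itv /= x0 lt_neqAle xn1 x1.
  case=> [|->]; last by rewrite /D /= !lee_fin ler01 lexx.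
  by rewrite /A /D /= in_itv /= => /andP[x0 /ltW x1]; rewrite !lee_fin x0 x1.
have mA : measurable A by exact: measurable_itv.
have fA : {in A, f =1 cst +oo}.
  move=> x; rewrite inE /A /= in_itv /= => /andP[_ x1].
  by rewrite /f cov_inf.
have f0 : forall x, D x -> 0 <= f x.
  move=> x; rewrite DE => -[xA|->]; first by rewrite fA ?inE // leey.
  by rewrite /f cov_one elog2_one.
have ADsub : A `<=` D by rewrite DE; exact: subsetUl.
apply/eqP; rewrite eq_le leey /=.
apply: (le_trans _ (@ge0_subset_integral _ _ _ lebesgue_measure A D mA _ f _ f0 _)).
- have h : lebesgue_measure A = 1%:E.
    by rewrite /A lebesgue_measure_itv /= lte_fin ltr01 oppr0 adde0.
  rewrite (eq_integral _ _ fA) integral_cst //.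
  have H : forall m : \bar RR, m = 1%:E -> +oo <= +oo * m by move=> m ->; rewrite mule1.
  by apply: H; exact: h.
- by rewrite DE; apply: measurableU.
- rewrite DE; apply/measurable_funU => //; split; last exact: measurable_fun_set1.
  apply: eq_measurable_fun; first by move=> x xA; rewrite fA.
  move=> _ Y mY; rewrite preimage_cst; case: ifPn => _; [rewrite setIT | rewrite setI0] => //.
- by move=> x /ADsub.
Qed.

Lemma gap0 (D : option nat) (tx : seq bool -> unit) (ts : seq bool -> bool -> nat)
  (b : nat -> bool) (t : nat) :
  realizable [set: unit -> nat] D tx ts -> (0 < t)%N -> lt_depth D t ->
  gap ell ts (Defs.prefix b t) = 0%R.
Proof.
move=> Hr t0 Dt.
have U : forall u, tx u = tt by move=> u; case: (tx u).
have hD : le_depth D t.+1 by move: Dt; case: D {Hr}.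
pose b0 := fun i => if i == t then false else b i.
pose b1 := fun i => if i == t then true else b i.
have P : forall c : bool, Defs.prefix (fun i => if i == t then c else b i) t = Defs.prefix b t.
  move=> c; rewrite /Defs.prefix /mkseq; apply/eq_in_map => i.
  by rewrite mem_iota add0n => /andP[_ it]; rewrite (ltn_eqF it).
have [h0 _ H0] := Hr b0 t.+1 hD.
have [h1 _ H1] := Hr b1 t.+1 hD.
have e0 := H0 0%N (ltn0Sn _); have e0' := H0 t (ltnSn _).
have e1 := H1 0%N (ltn0Sn _); have e1' := H1 t (ltnSn _).
rewrite !U in e0 e0' e1 e1'.
rewrite /b0 /b1 in e0 e0' e1 e1'.
rewrite (P false) eqxx in e0'; rewrite (P true) eqxx in e1'.
have tn0 : (0%N == t) = false by rewrite eq_sym (gtn_eqF t0).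
rewrite tn0 in e0 e1.
rewrite /gap -e0' -e1' e0 e1 /ell eqxx //.
Qed.

Lemma branch_le1 (D : option nat) (tx : seq bool -> unit) (ts : seq bool -> bool -> nat)
  (b : nat -> bool) :
  realizable [set: unit -> nat] D tx ts -> branch_sum ell D ts b <= 1%:E.
Proof.
move=> Hr; rewrite /branch_sum.
rewrite (esumID [set 0%N]); last by move=> i _; rewrite lee_fin /gap ell_ge0.
rewrite [X in _ + X]esum1 ?adde0; last first.
  move=> i [Di /= i0]; rewrite (gap0 _ _ _ _ _ Hr) //; by rewrite lt0n; apply/eqP.
have [D0|nD0] := pselect (lt_depth D 0).
  rewrite (_ : _ `&` _ = [set 0%N]); last first.
    by apply/seteqP; split => [x [] //|x /= ->].
  by rewrite esum_set1 ?lee_fin ?ell_le1 // /gap ell_ge0.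
rewrite (_ : _ `&` _ = set0) ?esum_set0 ?lee01 //.
by apply/seteqP; split => [x [] /= ? ?|x //]; subst.
Qed.

Lemma Donl_le1 : Donl ell [set: unit -> nat] <= 1%:E.
Proof.
rewrite /Donl; apply: ge_ereal_sup => _ [[[D tx] ts] /= Hr <-].
apply: (@le_trans _ _ (branch_sum ell D ts (fun _ => false))).
  by apply: ereal_inf_lbound; exists (fun _ => false).
by have := @branch_le1 D tx ts xpred0 Hr.
Qed.

Theorem proposition1p9 :
  exists (X Y : Type) (ell : Y -> Y -> Rdefinitions.R) (H : set (X -> Y)),
    [/\ is_metric ell, diam ell H < +oo, Phi ell H = +oo & Donl ell H < +oo].
Proof.
exists unit, nat, ell, [set: unit -> nat]; split.
- exact: metric_ell.
- by rewrite diam1 ltry.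
- exact: Phi_inf.
- exact: (le_lt_trans Donl_le1 (ltry _)).
Qed.
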